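(* The coefficient matrix $\mathbf Z_\mathrm{p} = \mathbf M\, \mathbf Q\, \hat{\mathbf Z}\, \mathbf Q\, \mathbf G\, \mathbf P\, \mathbf G^\mathrm{T}\, \mathbf Q\, \hat{\mathbf Z}\, \mathbf Q\, \mathbf M$ of the proposed preconditioned formulation is symmetric, positive-definite.
   Context: Setting: BEM (Galerkin) discretization of the symmetric formulation of the EEG forward problem on $N$ nested, smooth, triangulated surfaces $\Gamma_1,\dots,\Gamma_N$ (piecewise-homogeneous conductivities $\sigma_i$, exterior conductivity zero), with piecewise-linear pyramid functions $\lambda$ on vertices and piecewise-constant patch functions $\pi$ on cells. $\mathbf Z=\begin{pmatrix}\mathbf N & \mathbf D^*\\ \mathbf D & \mathbf S\end{pmatrix}$ is the (symmetric) system matrix of the symmetric formulation (hypersingular, adjoint double-layer, double-layer, single-layer blocks with conductivity-dependent coefficients; last block row/column removed). $\hat{\mathbf Z}=\mathbf Z+\boldsymbol\zeta\boldsymbol\zeta^\mathrm{T}$ is its deflated, invertible version, where $\boldsymbol\zeta$ is zero except for the block $\mathbf G_{N,\lambda\lambda}^\mathrm{T}\mathbf 1$ corresponding to the potential on $\Gamma_N$. $\mathbf Q$ is a diagonal matrix with positive entries $q_{V,i}\sqrt{R_i}$ on the potential unknowns of $\Gamma_i$ and $q_{C,i}/\sqrt{R_i}$ on the current unknowns, with $q_{V,i}=\max(\sigma_i,\sigma_{i+1})^{-1/2}$, $q_{C,i}=\min(\sigma_i,\sigma_{i+1})^{1/2}$ and $R_i>0$ a characteristic size of $\Gamma_i$.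 $\mathbf P$ is block-diagonal with blocks $R_i^{-2}\hat{\mathbf\Delta}_i^{-1}$ ($i=1,\dots,N$) and $R_i^{2}\hat{\tilde{\mathbf\Delta}}_i$ ($i=1,\dots,N-1$), where $\hat{\mathbf\Delta}_i=\mathbf\Delta_i+\mathbf G_{i,\lambda\lambda}^\mathrm{T}\mathbf 1\mathbf 1^\mathrm{T}\mathbf G_{i,\lambda\lambda}$ and $\hat{\tilde{\mathbf\Delta}}_i=\tilde{\mathbf\Delta}_i+\mathbf G_{i,\tilde\lambda\tilde\lambda}^\mathrm{T}\mathbf 1\mathbf 1^\mathrm{T}\mathbf G_{i,\tilde\lambda\tilde\lambda}$ are the (symmetric positive-definite) deflated Laplace–Beltrami stiffness matrices discretized with primal pyramid functions and with dual pyramid functions (on the barycentric dual mesh), respectively; $\mathbf G_{i,fg}$ denotes Gram matrices $(f_{i,m},g_{i,n})_{L^2(\Gamma_i)}$. $\mathbf G$ is block-diagonal with identity blocks on the potential unknowns and blocks $\mathbf G_{i,\tilde\lambda\pi}^{-1}$ on the current unknowns. $\mathbf M$ is block-diagonal with blocks $\mathbf G_{i,\lambda\lambda}^{-1/2}$ and $\mathbf G_{i,\pi\pi}^{-1/2}$. *)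

(* Defs.v *)
From HB Require Import structures.
From mathcomp Require Import all_boot all_order all_algebra.
Set Implicit Arguments. Unset Strict Implicit. Unset Printing Implicit Defensive.
Import Order.TTheory GRing.Theory Num.Theory.
Local Open Scope ring_scope.

(* Conventions (0-based): surfaces Gamma_0 .. Gamma_(N-1), nested; the
   conductivity inside Gamma_i (between Gamma_(i-1) and Gamma_i) is sigma i,
   the exterior one is sigma N (= 0).  nv i = number of vertices of Gamma_i
   (pyramid functions lambda / potential unknowns), nc i = number of cells of
   Gamma_i (patch functions pi, dual pyramid functions tilde-lambda, current
   unknowns).  Potential unknowns: Gamma_0..Gamma_(N-1); current unknowns:
   Gamma_0..Gamma_(N-2) (last block row/column removed). *)

Section Defs.
Variable R : rcfType.

Definition spd n (A : 'M[R]_n) : Prop :=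
  A^T = A /\ forall x : 'cV[R]_n, x != 0 -> 0 < (x^T *m A *m x) 0 0.

Definition is_inv_sqrt n (B A : 'M[R]_n) : Prop :=
  spd B /\ B *m B *m A = 1%:M.

Definition deflate n (Delta Gram : 'M[R]_n) : 'M[R]_n :=
  Delta + (Gram^T *m (const_mx 1 : 'cV[R]_n)) *m ((const_mx 1 : 'cV[R]_n)^T *m Gram).

Variables (N : nat) (nv nc : nat -> nat).

Definition nP := (\sum_(i < N) nv i)%N.
Definition nC := (\sum_(j < N.-1) nc j)%N.

Definition bdiag (A : forall i : 'I_N, 'M[R]_(nv i))
  (B : forall j : 'I_N.-1, 'M[R]_(nc j)) : 'M[R]_(nP + nC) :=
  block_mx (\mxdiag_(i < N) A i) 0 0 (\mxdiag_(j < N.-1) B j).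

Definition Zsys (Nh : 'M[R]_nP) (D : 'M[R]_(nC, nP)) (S : 'M[R]_nC)
  : 'M[R]_(nP + nC) := block_mx Nh D^T D S.

Definition zeta (Gll : forall i : nat, 'M[R]_(nv i)) : 'cV[R]_(nP + nC) :=
  col_mx (\mxcol_(i < N) (if (i : nat) == N.-1
                          then (Gll i)^T *m const_mx 1 else 0)) 0.

Definition Zhat Nh D S Gll : 'M[R]_(nP + nC) :=
  Zsys Nh D S + zeta Gll *m (zeta Gll)^T.

Definition qV (sigma : nat -> R) (i : nat) : R :=
  (Num.sqrt (Num.max (sigma i) (sigma i.+1)))^-1.
Definition qC (sigma : nat -> R) (i : nat) : R :=
  Num.sqrt (Num.min (sigma i) (sigma i.+1)).

Definition Qmat (sigma Rs : nat -> R) : 'M[R]_(nP + nC) :=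
  bdiag (fun i => (qV sigma i * Num.sqrt (Rs i))%:M)
        (fun j => (qC sigma j / Num.sqrt (Rs j))%:M).

Definition Pmat (Rs : nat -> R)
  (Dl : forall i : nat, 'M[R]_(nv i)) (Gll : forall i : nat, 'M[R]_(nv i))
  (Dt : forall j : nat, 'M[R]_(nc j)) (Gtt : forall j : nat, 'M[R]_(nc j))
  : 'M[R]_(nP + nC) :=
  bdiag (fun i => (Rs i ^- 2) *: invmx (deflate (Dl i) (Gll i)))
        (fun j => (Rs j ^+ 2) *: deflate (Dt j) (Gtt j)).

Definition Gmat (Gtp : forall j : nat, 'M[R]_(nc j)) : 'M[R]_(nP + nC) :=
  bdiag (fun i => 1%:M) (fun j => invmx (Gtp j)).

Definition Mmat (Mll : forall i : nat, 'M[R]_(nv i))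
  (Mpp : forall j : nat, 'M[R]_(nc j)) : 'M[R]_(nP + nC) :=
  bdiag (fun i => Mll i) (fun j => Mpp j).

End Defs.

(* Main.v *)
Require Import Defs.
From HB Require Import structures.
From mathcomp Require Import all_boot all_order all_algebra zify.
Import Order.TTheory GRing.Theory Num.Theory.
Local Open Scope ring_scope.
Set Implicit Arguments. Unset Strict Implicit. Unset Printing Implicit Defensive.
Section H.
Variable R : rcfType.

Lemma spd_congr n (B K : 'M[R]_n) : spd B -> K \in unitmx -> spd (K^T *m B *m K).
Proof.
case=> sB pB uK; split; first by rewrite !trmx_mul trmxK sB mulmxA.
move=> x nx.
have nKx : K *m x != 0.
  by apply: contra nx => /eqP h; rewrite -(mulKmx uK x) h mulmx0.
have := pB _ nKx.
by rewrite !trmx_mul !mulmxA.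
Qed.

Lemma spd_unit n (A : 'M[R]_n) : spd A -> A \in unitmx.
Proof.
case=> sA pA; rewrite unitmxE unitfE; apply/negP => /det0P [v nv vA].
have nvT : v^T != 0 by rewrite trmx_eq0.
have := pA _ nvT.
by rewrite trmxK vA mul0mx mxE ltxx.
Qed.

Lemma spd_inv n (A : 'M[R]_n) : spd A -> spd (invmx A).
Proof.
move=> hA; have uA := spd_unit hA; have sA := hA.1.
have -> : invmx A = (invmx A)^T *m A *m invmx A.
  by rewrite trmx_inv sA -mulmxA mulmxV // mulmx1.
by apply: spd_congr => //; rewrite unitmx_inv.
Qed.

Lemma spd_scale n (c : R) (A : 'M[R]_n) : 0 < c -> spd A -> spd (c *: A).
Proof.
move=> c0 [sA pA]; split; first by rewrite linearZ /= sA.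
move=> x nx; rewrite -scalemxAr -scalemxAl mxE.
by apply: mulr_gt0 => //; apply: pA.
Qed.

Lemma spd_block m n (A : 'M[R]_m) (B : 'M[R]_n) :
  spd A -> spd B -> spd (block_mx A 0 0 B).
Proof.
move=> [sA pA] [sB pB]; split; first by rewrite tr_block_mx sA sB !trmx0.
move=> x nx; rewrite -(vsubmxK x) tr_col_mx mul_row_block !mulmx0 addr0 add0r
  mul_row_col mxE.
have ge u (C : 'M[R]_u) (hC : forall y : 'cV[R]_u, y != 0 -> 0 < (y^T *m C *m y) 0 0)
  (y : 'cV[R]_u) : 0 <= (y^T *m C *m y) 0 0.
  by case: (eqVneq y 0) => [->|ny]; [rewrite mulmx0 mxE | exact/ltW/hC].
case: (eqVneq (usubmx x) 0) => [hu|hu].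
  have hd : dsubmx x != 0.
    by apply: contra nx => /eqP hd; rewrite -(vsubmxK x) hu hd col_mx0.
  by rewrite ltr_wpDl // ?ge // pB.
by rewrite ltr_wpDr // ?ge // pA.
Qed.

Lemma mul_mxdiag p (p_ : 'I_p -> nat) (A B : forall i, 'M[R]_(p_ i)) :
  \mxdiag_i A i *m \mxdiag_i B i = \mxdiag_i (A i *m B i).
Proof.
have -> : \mxdiag_i A i =
   mxblock (fun i j => if i == j then conform_mx 0 (A i) else 0) by [].
rewrite mul_mxblock_mxdiag /mxdiag; apply: eq_mxblock => i j.
case: eqVneq => [<-|]; last by rewrite mul0mx.
by rewrite !conform_mx_id.
Qed.

Lemma spd_mxdiag p (p_ : 'I_p -> nat) (D : forall i, 'M[R]_(p_ i)) :
  (forall i, spd (D i)) -> spd (\mxdiag_i D i).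
Proof.
move=> hD; split.
  by rewrite tr_mxdiag; apply: eq_mxdiag => i; case: (hD i).
move=> x nx.
rewrite -(submxcolK x) tr_mxcol mul_mxrow_mxdiag mul_mxrow_mxcol summxE.
have [i ni] : exists i, submxcol x i != 0.
  case: (pickP (fun i => submxcol x i != 0)) => [i ni|h]; first by exists i.
  case/negP: nx; apply/eqP; rewrite -(submxcolK x) -(mxcol0 (p_ := p_)).
  by apply: eq_mxcol => i; apply/eqP; move/negbFE: (h i).
rewrite (bigD1 i) //=; apply: ltr_wpDr; last by case: (hD i) => _; apply.
apply: sumr_ge0 => j _.
case: (eqVneq (submxcol x j) 0) => [->|nj]; first by rewrite mulmx0 mxE.
by apply/ltW; case: (hD j) => _; apply.
Qed.

Lemma mxdiag1 p (p_ : 'I_p -> nat) : \mxdiag_i (1%:M : 'M[R]_(p_ i)) = 1%:M.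
Proof. exact: mxdiagZ. Qed.

Lemma mxdiag_unit p (p_ : 'I_p -> nat) (A : forall i, 'M[R]_(p_ i)) :
  (forall i, A i \in unitmx) -> \mxdiag_i A i \in unitmx.
Proof.
move=> hA; apply: (proj1 (mulmx1_unit (B := \mxdiag_i invmx (A i)) _)).
rewrite mul_mxdiag -(mxdiag1 p_); apply: eq_mxdiag => i; exact: mulmxV.
Qed.

Lemma block_unit m n (A : 'M[R]_m) (B : 'M[R]_n) :
  A \in unitmx -> B \in unitmx -> block_mx A 0 0 B \in unitmx.
Proof.
move=> uA uB; apply: (proj1 (mulmx1_unit (B := block_mx (invmx A) 0 0 (invmx B)) _)).
by rewrite mulmx_block !mulmx0 !mul0mx !addr0 !add0r !mulmxV // -scalar_mx_block.
Qed.

End H.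

Theorem proposition1 (R : rcfType) (N : nat) (nv nc : nat -> nat)
  (sigma Rs : nat -> R)
  (Nh : 'M[R]_(nP N nv)) (D : 'M[R]_(nC N nc, nP N nv)) (S : 'M[R]_(nC N nc))
  (Gll : forall i : nat, 'M[R]_(nv i))      (* G_{i,lambda lambda} *)
  (Gpp : forall j : nat, 'M[R]_(nc j))      (* G_{i,pi pi} *)
  (Gtp : forall j : nat, 'M[R]_(nc j))      (* G_{i,tilde-lambda pi} *)
  (Gtt : forall j : nat, 'M[R]_(nc j))      (* G_{i,tilde-lambda tilde-lambda} *)
  (Dl : forall i : nat, 'M[R]_(nv i))       (* Delta_i *)
  (Dt : forall j : nat, 'M[R]_(nc j))       (* tilde Delta_i *)
  (Mll : forall i : nat, 'M[R]_(nv i))      (* G_{i,lambda lambda}^{-1/2} *)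
  (Mpp : forall j : nat, 'M[R]_(nc j))      (* G_{i,pi pi}^{-1/2} *)
  (HN : (0 < N)%N)
  (Hsigma : forall k, (k < N)%N -> 0 < sigma k)
  (Hext : sigma N = 0)
  (HR : forall i, 0 < Rs i)
  (HNh : Nh^T = Nh) (HS : S^T = S)
  (HZhat : Zhat Nh D S Gll \in unitmx)
  (HGll : forall i, (i < N)%N -> spd (Gll i))
  (HGpp : forall j, (j < N.-1)%N -> spd (Gpp j))
  (HGtp : forall j, (j < N.-1)%N -> Gtp j \in unitmx)
  (HDl : forall i, (i < N)%N -> spd (deflate (Dl i) (Gll i)))
  (HDt : forall j, (j < N.-1)%N -> spd (deflate (Dt j) (Gtt j)))
  (HMll : forall i, (i < N)%N -> is_inv_sqrt (Mll i) (Gll i))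
  (HMpp : forall j, (j < N.-1)%N -> is_inv_sqrt (Mpp j) (Gpp j)) :
  let M := Mmat N Mll Mpp in
  let Q := Qmat N nv nc sigma Rs in
  let Zh := Zhat Nh D S Gll in
  let G := Gmat N nv (nc:=nc) Gtp in
  let P := Pmat N Rs Dl Gll Dt Gtt in
  spd (M *m Q *m Zh *m Q *m G *m P *m G^T *m Q *m Zh *m Q *m M).
Proof.
move=> M Q Zh G P.
have ltj : forall j : 'I_N.-1, (j < N)%N /\ (j.+1 < N)%N.
  by move=> j; have := ltn_ord j; lia.
have scal_unit : forall n (c : R), c != 0 -> (c%:M : 'M[R]_n) \in unitmx.
  move=> n c c0; apply: (proj1 (mulmx1_unit (B := c^-1%:M) _)).
  by rewrite -scalar_mxM mulfV.
have sM : M^T = M.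
  rewrite /M /Mmat /bdiag tr_block_mx !trmx0 !tr_mxdiag; congr block_mx.
    by apply: eq_mxdiag => i; case: (HMll i (ltn_ord i)) => [[]].
  by apply: eq_mxdiag => j; case: (HMpp j (ltn_ord j)) => [[]].
have uM : M \in unitmx.
  rewrite /M /Mmat /bdiag; apply: block_unit; apply: mxdiag_unit.
    move=> i; case: (HMll i (ltn_ord i)) => _ h.
    by rewrite -mulmxA in h; case: (mulmx1_unit h).
  move=> j; case: (HMpp j (ltn_ord j)) => _ h.
  by rewrite -mulmxA in h; case: (mulmx1_unit h).
have sQ : Q^T = Q.
  rewrite /Q /Qmat /bdiag tr_block_mx !trmx0 !tr_mxdiag; congr block_mx.
    by apply: eq_mxdiag => i; rewrite tr_scalar_mx.
  by apply: eq_mxdiag => j; rewrite tr_scalar_mx.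
have uQ : Q \in unitmx.
  rewrite /Q /Qmat /bdiag; apply: block_unit; apply: mxdiag_unit.
    move=> i; apply: scal_unit; apply: lt0r_neq0; apply: mulr_gt0.
      rewrite /qV invr_gt0 sqrtr_gt0 lt_max Hsigma //.
    by rewrite sqrtr_gt0.
  move=> j; apply: scal_unit; apply: lt0r_neq0; apply: divr_gt0.
    by case: (ltj j) => h1 h2; rewrite /qC sqrtr_gt0 lt_min !Hsigma.
  by rewrite sqrtr_gt0.
have sZ : Zh^T = Zh.
  by rewrite /Zh /Zhat linearD /= trmx_mul trmxK /Zsys tr_block_mx HNh HS trmxK.
have uG : G \in unitmx.
  rewrite /G /Gmat /bdiag; apply: block_unit; apply: mxdiag_unit.
    by move=> i; apply: unitmx1.
  by move=> j; rewrite unitmx_inv; apply: HGtp.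
have pP : spd P.
  rewrite /P /Pmat /bdiag; apply: spd_block; apply: spd_mxdiag.
    move=> i; apply: spd_scale; first by rewrite invr_gt0 exprn_gt0.
    by apply: spd_inv; apply: HDl.
  move=> j; apply: spd_scale; first by rewrite exprn_gt0.
  by apply: HDt.
have -> : M *m Q *m Zh *m Q *m G *m P *m G^T *m Q *m Zh *m Q *m M =
  (Q *m Zh *m Q *m M)^T *m ((G^T)^T *m P *m G^T) *m (Q *m Zh *m Q *m M).
  by rewrite !trmx_mul trmxK sM sQ sZ !mulmxA.
apply: spd_congr; first by apply: spd_congr => //; rewrite unitmx_tr.
by rewrite !unitmx_mul uQ HZhat uM.
Qed.
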